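(* Let $\mathcal{K}\subseteq\mathbb{R}^d$, let $f(x)=\mathbb{E}_\xi[f(x;\xi)]$ where for every realisation $\xi$ the function $f(\cdot;\xi):\mathbb{R}^d\to\mathbb{R}$ is differentiable with $\|\nabla f(x;\xi)-\nabla f(y;\xi)\|_2\le L\|x-y\|_2$ for all $x,y$, and $\mathbb{E}_\xi[\nabla f(x;\xi)]=\nabla f(x)$. Assume $\mathbb{E}_\xi[\|\nabla f(x)-\nabla f(x;\xi)\|_2^2]\le\sigma^2$ for all $x\in\mathcal{K}$. Let $\nu>0$, let $u=(u_1,\dots,u_d)$ with $u_1,\dots,u_d$ independent Rademacher random variables (independent of $\xi$), and define \[ g_\nu(x;\xi)=\frac{1}{\nu}\big(f(x+\nu u;\xi)-f(x;\xi)\big)u,\qquad \nabla f_\nu(x)=\mathbb{E}_u\Big[\frac{1}{\nu}\big(f(x+\nu u)-f(x)\big)u\Big]. \] Then for every $x\in\mathcal{K}$, \[ \mathbb{E}\big[\|g_\nu(x;\xi)-\nabla f_\nu(x)\|_\infty^2\big]\le \frac{3\nu^2d^2L^2}{2}+10\|\nabla f(x)\|_2^2+8\sigma^2 . \]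
   Context: A Rademacher random variable takes the values $+1$ and $-1$ with probability $1/2$ each. The expectation $\mathbb{E}$ is over both $u$ and $\xi$. *)

(* Defs.v *)
From HB Require Import structures.
From mathcomp Require Import all_boot all_order all_algebra.
From mathcomp Require Import all_classical all_reals all_analysis.
Set Implicit Arguments. Unset Strict Implicit. Unset Printing Implicit Defensive.
Import Order.TTheory GRing.Theory Num.Theory.
Import numFieldNormedType.Exports.
Local Open Scope ring_scope.

Definition norm2 {R : realType} {d : nat} (v : 'rV[R]_d) : R :=
  Num.sqrt (\sum_(i < d) (v ord0 i) ^+ 2).

(* Sup norm ||v||_oo (0 for d = 0) *)
Definition normInf {R : realType} {d : nat} (v : 'rV[R]_d) : R :=
  \big[Num.max/0]_(i < d) `|v ord0 i|.

Definition grad {R : realType} {d : nat} (f : 'rV[R]_d -> R) (x : 'rV[R]_d)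
  : 'rV[R]_d :=
  \row_(i < d) ('D_(delta_mx ord0 i) f x).

(* the Rademacher vector indexed by a sign pattern b : {0..d-1} -> bool *)
Definition signvec {R : realType} {d : nat} (b : {ffun 'I_d -> bool})
  : 'rV[R]_d :=
  \row_(i < d) (if b i then 1 else -1).

Definition g_nu {R : realType} {d : nat} (F : 'rV[R]_d -> R) (nu : R)
  (x : 'rV[R]_d) (b : {ffun 'I_d -> bool}) : 'rV[R]_d :=
  ((F (x + nu *: signvec b) - F x) / nu) *: signvec b.

(* grad f_nu(x) = E_u[ (f(x + nu u) - f(x))/nu u ], u uniform on {+-1}^d *)
Definition grad_f_nu {R : realType} {d : nat} (f : 'rV[R]_d -> R) (nu : R)
  (x : 'rV[R]_d) : 'rV[R]_d :=
  (2 ^+ d)^-1 *: \sum_(b : {ffun 'I_d -> bool}) g_nu f nu x b.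

(* Main.v *)
Require Import Defs.
From HB Require Import structures.
From mathcomp Require Import all_boot all_order all_algebra.
From mathcomp Require Import all_classical all_reals all_analysis.
From mathcomp Require Import ring lra.
Import Order.TTheory GRing.Theory Num.Theory.
Import numFieldNormedType.Exports.
Local Open Scope ring_scope.

Section Signs.
Context {R : realType} {d : nat}.
Implicit Types (b : {ffun 'I_d -> bool}).

Definition sgn b (i : 'I_d) : R := if b i then 1 else -1.

Lemma signvecE b i : signvec b ord0 i = sgn b i :> R.
Proof. by rewrite /signvec mxE. Qed.

Lemma sgn_sq b i : sgn b i * sgn b i = 1.
Proof. by rewrite /sgn; case: (b i); rewrite ?mulr1 ?mulrNN ?mulr1. Qed.

Lemma sgn_sqX b i : sgn b i ^+ 2 = 1.
Proof. by rewrite expr2 sgn_sq. Qed.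

Lemma abs_sgn b i : `|sgn b i| = 1.
Proof. by rewrite /sgn; case: (b i); rewrite ?normrN normr1. Qed.

Definition flip (i : 'I_d) b : {ffun 'I_d -> bool} :=
  [ffun k => if k == i then ~~ b k else b k].

Lemma flipK i : involutive (flip i).
Proof.
move=> b; apply/ffunP => k; rewrite !ffunE.
by case: (k =P i) => // _; rewrite negbK.
Qed.

Lemma card_sgn : #|{: {ffun 'I_d -> bool}}| = (2 ^ d)%N.
Proof. by rewrite card_ffun card_bool card_ord. Qed.

Lemma sum_sgn2 i j :
  \sum_b sgn b i * sgn b j = if i == j then 2 ^+ d else 0.
Proof.
case: (i =P j) => [<-|nij].
  under eq_bigr do rewrite sgn_sq.
  by rewrite sumr_const card_sgn natrX.
have H : \sum_b sgn b i * sgn b j = - \sum_b sgn b i * sgn b j.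
  rewrite {1}(reindex_inj (inv_inj (flipK i))) /= -sumrN.
  apply: eq_bigr => b _; rewrite /sgn !ffunE eqxx.
  have -> : (j == i) = false by apply/eqP => E; apply: nij.
  by case: (b i) => /=; ring.
move/eqP: H; rewrite -subr_eq0 opprK -mulr2n -mulr_natl mulf_eq0 pnatr_eq0 /=.
by move/eqP.
Qed.

End Signs.

Section Dots.
Context {R : realType} {d : nat}.
Implicit Types (b : {ffun 'I_d -> bool}) (w : 'I_d -> R).

Lemma sum_if_eq (i : 'I_d) (F : 'I_d -> R) :
  \sum_j F j * (if i == j then 2 ^+ d else 0) = F i * 2 ^+ d.
Proof.
rewrite (bigD1 i) //= eqxx big1 ?addr0 // => j /negbTE.
by rewrite eq_sym => ->; rewrite mulr0.
Qed.

Lemma avg_dot2 w :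
  \sum_b (\sum_i w i * sgn b i) ^+ 2 = 2 ^+ d * \sum_i w i ^+ 2.
Proof.
under eq_bigr do rewrite expr2 mulr_suml; rewrite exchange_big /=.
rewrite mulr_sumr; apply: eq_bigr => i _.
under eq_bigr do rewrite mulr_sumr; rewrite exchange_big /=.
under eq_bigr => j _.
  have -> : \sum_b w i * sgn b i * (w j * sgn b j) =
      w i * w j * \sum_b sgn b i * sgn b j.
    by rewrite mulr_sumr; apply: eq_bigr => b _; ring.
  rewrite sum_sgn2; over.
by rewrite sum_if_eq expr2; ring.
Qed.

Lemma avg_dot_sgn w j :
  \sum_b (\sum_i w i * sgn b i) * sgn b j = 2 ^+ d * w j.
Proof.
under eq_bigr do rewrite mulr_suml; rewrite exchange_big /=.
under eq_bigr => i _.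
  have -> : \sum_b w i * sgn b i * sgn b j = w i * \sum_b sgn b j * sgn b i.
    by rewrite mulr_sumr; apply: eq_bigr => b _; ring.
  rewrite sum_sgn2; over.
rewrite (bigD1 j) //= eqxx big1 ?addr0; first by ring.
by move=> k /negbTE; rewrite eq_sym => ->; rewrite mulr0.
Qed.

End Dots.

Section Taylor.
Context {R : realType} {d : nat}.

Lemma dirderE (G : 'rV[R]_d -> R) y v : differentiable G y ->
  'D_v G y = \sum_i v ord0 i * grad G y ord0 i.
Proof.
move=> dG; rewrite deriveE // {1}(row_sum_delta v) linear_sum.
apply: eq_bigr => i _; rewrite linearZ /= -deriveE // /grad mxE.
by [].
Qed.

Lemma line_is_derive (G : 'rV[R]_d -> R) a v (t : R) :
  differentiable G (a + t *: v) ->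
  is_derive t 1 (fun s : R => G (a + s *: v)) ('D_v G (a + t *: v)).
Proof.
move=> dG.
have E : (fun h : R => h^-1 *: (((fun s : R => G (a + s *: v)) \o shift t) (h *: 1)
            - G (a + t *: v))) =
         (fun h : R => h^-1 *: ((G \o shift (a + t *: v)) (h *: v) - G (a + t *: v))).
  apply/funext => h /=; congr (_ *: (G _ - _)).
  rewrite /shift /= (_ : h%:A = h); last by rewrite /GRing.scale /= mulr1.
  by rewrite scalerDl addrCA.
apply: DeriveDef.
  by rewrite /derivable E; exact: diff_derivable.
by rewrite /derive E.
Qed.

End Taylor.

Section T2.
Context {R : realType} {d : nat}.
Local Open Scope classical_set_scope.

Lemma mvt_quad (G : 'rV[R]_d -> R) x v (k : R) :
  (forall y, differentiable G y) ->
  exists2 s, s \in `]0, 1[%R &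
    G (x + v) - G x - 'D_v G x - k = 'D_v G (x + s *: v) - 'D_v G x - k * (s + s).
Proof.
move=> dG.
pose c0 := 'D_v G x.
pose psi : R -> R := (fun s : R => G (x + s *: v)) - c0 \*: (@id R) - k \*: ((@id R) * (@id R)).
have Hd (s : R) : is_derive s (1 : R) psi ('D_v G (x + s *: v) - c0 - k * (s + s)).
  apply: is_derive_eq.
    rewrite /psi; apply: is_deriveB; first apply: is_deriveB.
    by apply: line_is_derive.
  have A (y : R) : y%:A = y by rewrite /GRing.scale /= mulr1.
  by rewrite !A.
have cont : {within `[0, 1], continuous psi}.
  apply: derivable_within_continuous => s _.
  exact: (@ex_derive _ _ _ _ _ _ _ (Hd s)).
have [s s01 E] := MVT ltr01 (fun s _ => Hd s) cont.
exists s => //.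
have Hpsi (t : R) : psi t = G (x + t *: v) - c0 * t - k * (t * t) by [].
move: E; rewrite !Hpsi !scale1r !scale0r addr0 subr0 !mulr1 /c0 => E.
by rewrite -E; ring.
Qed.
End T2.

Section T3.
Context {R : realType} {d : nat}.

Lemma cs_sum (a b : 'I_d -> R) :
  (\sum_i a i * b i) ^+ 2 <= (\sum_i a i ^+ 2) * (\sum_i b i ^+ 2).
Proof.
have E : \sum_i \sum_j (a i * b j - a j * b i) ^+ 2 =
    2 * ((\sum_i a i ^+ 2) * (\sum_i b i ^+ 2) - (\sum_i a i * b i) ^+ 2).
  have -> : \sum_i \sum_j (a i * b j - a j * b i) ^+ 2 =
      \sum_i \sum_j (a i ^+ 2 * b j ^+ 2) + \sum_i \sum_j (a j ^+ 2 * b i ^+ 2)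
      - 2 * \sum_i \sum_j ((a i * b i) * (a j * b j)).
    rewrite mulr_sumr -big_split -sumrB; apply: eq_bigr => i _.
    rewrite mulr_sumr -big_split -sumrB; apply: eq_bigr => j _.
    by rewrite /=; ring.
  have E1 : \sum_i \sum_j (a i ^+ 2 * b j ^+ 2) = (\sum_i a i ^+ 2) * (\sum_i b i ^+ 2).
    by rewrite mulr_suml; apply: eq_bigr => i _; rewrite mulr_sumr.
  have E2 : \sum_i \sum_j (a j ^+ 2 * b i ^+ 2) = (\sum_i a i ^+ 2) * (\sum_i b i ^+ 2).
    by rewrite exchange_big /= E1.
  have E3 : \sum_i \sum_j ((a i * b i) * (a j * b j)) = (\sum_i a i * b i) ^+ 2.
    by rewrite expr2 mulr_suml; apply: eq_bigr => i _; rewrite mulr_sumr.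
  rewrite E1 E2 E3; ring.
have : 0 <= 2 * ((\sum_i a i ^+ 2) * (\sum_i b i ^+ 2) - (\sum_i a i * b i) ^+ 2).
  rewrite -E; apply: sumr_ge0 => i _; apply: sumr_ge0 => j _; exact: sqr_ge0.
by rewrite pmulr_rge0 // subr_ge0.
Qed.

Lemma abs_dot_le (a b : 'I_d -> R) :
  `|\sum_i a i * b i| <= Num.sqrt (\sum_i a i ^+ 2) * Num.sqrt (\sum_i b i ^+ 2).
Proof.
rewrite -sqrtrM; last by apply: sumr_ge0 => i _; exact: sqr_ge0.
rewrite -sqrtr_sqr ler_wsqrtr //; exact: cs_sum.
Qed.


Lemma norm2_sq (v : 'rV[R]_d) : norm2 v ^+ 2 = \sum_i v ord0 i ^+ 2.
Proof. by rewrite /norm2 sqr_sqrtr //; apply: sumr_ge0 => i _; exact: sqr_ge0. Qed.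

Lemma norm2_ge0 (v : 'rV[R]_d) : 0 <= norm2 v.
Proof. exact: sqrtr_ge0. Qed.

Lemma norm2_scale (s : R) (v : 'rV[R]_d) : 0 <= s -> norm2 (s *: v) = s * norm2 v.
Proof.
move=> s0; rewrite /norm2.
have -> : \sum_i (s *: v) ord0 i ^+ 2 = s ^+ 2 * \sum_i v ord0 i ^+ 2.
  by rewrite mulr_sumr; apply: eq_bigr => i _; rewrite mxE exprMn.
by rewrite sqrtrM ?sqr_ge0 // sqrtr_sqr ger0_norm.
Qed.

Lemma taylor (G : 'rV[R]_d -> R) (L : R) x v :
  (forall y, differentiable G y) ->
  (forall y z, norm2 (grad G y - grad G z) <= L * norm2 (y - z)) ->
  `|G (x + v) - G x - 'D_v G x| <= L / 2 * \sum_i v ord0 i ^+ 2.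
Proof.
move=> dG hlip.
set S := \sum_i v ord0 i ^+ 2.
have S0 : 0 <= S by apply: sumr_ge0 => i _; exact: sqr_ge0.
have key s : 0 <= s -> `|'D_v G (x + s *: v) - 'D_v G x| <= L * s * S.
  move=> s0; rewrite !dirderE // -sumrB.
  have -> : \sum_i (v ord0 i * grad G (x + s *: v) ord0 i - v ord0 i * grad G x ord0 i)
      = \sum_i v ord0 i * (grad G (x + s *: v) - grad G x) ord0 i.
    by apply: eq_bigr => i _; rewrite !mxE mulrBr.
  apply: (le_trans (abs_dot_le _ _)).
  rewrite -/S -/(norm2 _).
  apply: (le_trans (ler_wpM2l (sqrtr_ge0 _) (hlip _ _))).
  rewrite addrAC subrr add0r norm2_scale // /norm2 -/S.
  have -> : Num.sqrt S * (L * (s * Num.sqrt S)) = L * s * (Num.sqrt S ^+ 2) by ring.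
  by rewrite sqr_sqrtr.
rewrite ler_norml; apply/andP; split.
- have [s s01 E] := mvt_quad G x v (- (L / 2 * S)) dG.
  have s0 : 0 <= s by move: s01; rewrite in_itv /= => /andP[/ltW].
  have := key s s0; rewrite ler_norml => /andP[H1 _].
  move: E H1; set Dd := 'D_v G (x + s *: v) - 'D_v G x.
  set r := G (x + v) - G x - 'D_v G x; move=> E H1.
  nra.
- have [s s01 E] := mvt_quad G x v (L / 2 * S) dG.
  have s0 : 0 <= s by move: s01; rewrite in_itv /= => /andP[/ltW].
  have := key s s0; rewrite ler_norml => /andP[_ H2].
  move: E H2; set Dd := 'D_v G (x + s *: v) - 'D_v G x.
  set r := G (x + v) - G x - 'D_v G x; move=> E H2.
  nra.
Qed.

End T3.

Section Alg.
Context {R : realType} {d : nat}.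
Implicit Types (b : {ffun 'I_d -> bool}).

Definition sq (w : 'I_d -> R) := \sum_i w i ^+ 2.
Definition dt (w : 'I_d -> R) b := \sum_j w j * sgn b j.

Lemma sq_ge0 w : 0 <= sq w.
Proof. by apply: sumr_ge0 => i _; exact: sqr_ge0. Qed.

Lemma bigmax_sq_le (v : 'I_d -> R) B : 0 <= B -> (forall i, v i ^+ 2 <= B) ->
  (\big[Num.max/0]_(i < d) `|v i|) ^+ 2 <= B.
Proof.
move=> B0 hv.
suff : 0 <= \big[Num.max/0]_(i < d) `|v i| /\ (\big[Num.max/0]_(i < d) `|v i|) ^+ 2 <= B.
  by case.
apply: (big_ind (fun y => 0 <= y /\ y ^+ 2 <= B)).
- by rewrite expr0n /=.
- move=> y z [y0 yB] [z0 zB]; rewrite /Num.max.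
  by case: ifP.
- by move=> i _; rewrite normr_ge0 real_normK ?num_real.
Qed.

Lemma term_le (c i : 'I_d -> R) (k : 'I_d) : True.
Proof. by []. Qed.

Lemma single_le (w : 'I_d -> R) k : w k ^+ 2 <= sq w.
Proof.
rewrite /sq (bigD1 k) //= lerDl; apply: sumr_ge0 => i _; exact: sqr_ge0.
Qed.

Lemma pair_le (w : 'I_d -> R) k i : i != k -> w k ^+ 2 + w i ^+ 2 <= sq w.
Proof.
move=> ik; rewrite /sq (bigD1 k) //= lerD2l (bigD1 i) //= lerDl.
by apply: sumr_ge0 => j _; exact: sqr_ge0.
Qed.

Lemma choose_case (c : 'I_d -> R) : exists (a1 a2 K0 : R) (w1 w2 : 'I_d -> R),
  [/\ 0 <= a1, 0 <= a2 /\ 0 <= K0, 3 * (a1 + a2) <= 8,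
      3 * (a1 * sq w1 + a2 * sq w2 + K0) <= 10 * sq c &
   forall (dl : 'I_d -> R) b i,
     (dt (fun j => c j - dl j) b * sgn b i - c i) ^+ 2 <=
       a1 * (dt (fun j => w1 j - dl j) b) ^+ 2
     + a2 * (dt (fun j => w2 j - dl j) b) ^+ 2 + K0].
Proof.
have C0 := sq_ge0 c.
case: (boolP [exists k, 3 / 5 * sq c < c k ^+ 2]) => [/existsP[k Hk]|/existsPn H].
- exists 1, (5 / 3), (5 / 2 * (sq c - c k ^+ 2)),
    (fun j => if j == k then 0 else c j), c.
  have Ew1 : sq (fun j => if j == k then 0 else c j) = sq c - c k ^+ 2.
    rewrite /sq [in RHS](bigD1 k) //= (bigD1 k) //= eqxx expr0n /= add0r addrAC subrr add0r.
    by apply: eq_bigr => j /negbTE ->.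
  split.
  - by lra.
  - by split; [lra | have := single_le c k; lra].
  - by lra.
  - by rewrite Ew1; lra.
  move=> dl b i.
  set a := dt (fun j => c j - dl j) b.
  have s2 := sgn_sq (R:=R) b i.
  have Hk2 : c k ^+ 2 <= sq c := single_le c k.
  have A1 : 0 <= (dt (fun j => (if j == k then 0 else c j) - dl j) b) ^+ 2 := sqr_ge0 _.
  case: (i =P k) => [->|/eqP ik].
  + have -> : a * sgn b k - c k = dt (fun j => (if j == k then 0 else c j) - dl j) b * sgn b k.
      rewrite /a /dt (bigD1 k) //= [in RHS](bigD1 k) //= eqxx.
      have -> : \sum_(j < d | j != k) (c j - dl j) * sgn b j =
                \sum_(j < d | j != k) ((if j == k then 0 else c j) - dl j) * sgn b j.
        by apply: eq_bigr => j /negbTE ->.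
      have s2k := sgn_sq (R:=R) b k.
      set T := \sum_(j < d | j != k) _.
      have -> : (c k - dl k) * sgn b k + T = ((0 - dl k) * sgn b k + T) + c k * sgn b k by ring.
      rewrite mulrDl -mulrA s2k mulr1; ring.
    rewrite exprMn sgn_sqX mulr1.
    have : 0 <= 5 / 3 * (a ^+ 2) by apply: mulr_ge0 => //; exact: sqr_ge0.
    have : 0 <= 5 / 2 * (sq c - c k ^+ 2) by apply: mulr_ge0 => //; lra.
    lra.
  + have Hi : c i ^+ 2 <= sq c - c k ^+ 2 by have := pair_le c k i ik; lra.
    set A := dt _ b in A1.
    have : 0 <= (a * sgn b i * (2/3) + c i) ^+ 2 := sqr_ge0 _.
    have sa : (a * sgn b i) ^+ 2 = a ^+ 2 by rewrite exprMn sgn_sqX mulr1.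
    move: sa; set u := a * sgn b i => sa.
    nra.
- exists 2, 0, (6 / 5 * sq c), c, c.
  split.
  - by lra.
  - by split; lra.
  - by lra.
  - by lra.
  move=> dl b i.
  set a := dt (fun j => c j - dl j) b.
  have Hi : c i ^+ 2 <= 3 / 5 * sq c by have := H i; rewrite real_ltNge ?num_real // negbK.
  have sa : (a * sgn b i) ^+ 2 = a ^+ 2 by rewrite exprMn sgn_sqX mulr1.
  have : 0 <= (a * sgn b i + c i) ^+ 2 := sqr_ge0 _.
  move: sa; set u := a * sgn b i => sa.
  nra.
Qed.


Lemma sum_dt2 (w : 'I_d -> R) : \sum_b (dt w b) ^+ 2 = 2 ^+ d * sq w.
Proof. exact: avg_dot2. Qed.



End Alg.

Section G.
Context {R : realType} {d : nat}.
Implicit Types (b : {ffun 'I_d -> bool}).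
Lemma perxi (c dl h : 'I_d -> R) (q : {ffun 'I_d -> bool} -> R) (beta a1 a2 K0 : R)
    (w1 w2 : 'I_d -> R) :
  0 <= a1 -> 0 <= a2 -> 0 <= K0 ->
  (forall b, `|q b - dt (fun j => c j - dl j) b| <= beta) ->
  (forall i, `|h i - c i| <= beta) ->
  (forall b i, (dt (fun j => c j - dl j) b * sgn b i - c i) ^+ 2 <=
       a1 * (dt (fun j => w1 j - dl j) b) ^+ 2
     + a2 * (dt (fun j => w2 j - dl j) b) ^+ 2 + K0) ->
  (2 ^+ d)^-1 * \sum_b (\big[Num.max/0]_(i < d) `|q b * sgn b i - h i|) ^+ 2
    <= 3 * (a1 * sq (fun j => w1 j - dl j) + a2 * sq (fun j => w2 j - dl j) + K0)
       + 6 * beta ^+ 2.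
Proof.
move=> a10 a20 K00 hq hh hX.
have b0 : 0 <= beta by apply: le_trans (hq [ffun => true]).
have Hb b : (\big[Num.max/0]_(i < d) `|q b * sgn b i - h i|) ^+ 2 <=
    3 * (a1 * (dt (fun j => w1 j - dl j) b) ^+ 2
       + a2 * (dt (fun j => w2 j - dl j) b) ^+ 2 + K0) + 6 * beta ^+ 2.
  apply: bigmax_sq_le.
    apply: addr_ge0; last by apply: mulr_ge0 => //; exact: sqr_ge0.
    apply: mulr_ge0 => //; apply: addr_ge0 => //; apply: addr_ge0;
      by apply: mulr_ge0 => //; exact: sqr_ge0.
  move=> i.
  set a := dt (fun j => c j - dl j) b.
  set X := a * sgn b i - c i.
  set Y := (q b - a) * sgn b i - (h i - c i).
  have -> : q b * sgn b i - h i = X + Y by rewrite /X /Y; ring.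
  have HY : `|Y| <= 2 * beta.
    rewrite /Y (le_trans (ler_normB _ _)) // normrM abs_sgn mulr1.
    by have := hq b; have := hh i; lra.
  have HY2 : Y ^+ 2 <= 4 * beta ^+ 2.
    rewrite -real_normK ?num_real //.
    have := ler_pM (normr_ge0 Y) (normr_ge0 Y) HY HY.
    rewrite expr2; lra.
  have := hX b i; rewrite -/a -/X => HX.
  have : 0 <= (2 * X - Y) ^+ 2 := sqr_ge0 _.
  lra.
have H2 : (0 : R) < 2 ^+ d by apply: exprn_gt0.
rewrite ler_pdivrMl //.
apply: (le_trans (ler_sum _ (fun b _ => Hb b))).
have SC (K : R) : \sum_(b : {ffun 'I_d -> bool}) K = 2 ^+ d * K.
  by rewrite sumr_const card_sgn -natrX mulr_natl.
rewrite big_split /= -mulr_sumr !big_split /= -!mulr_sumr !sum_dt2 !SC.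
set M := 2 ^+ d; rewrite le_eqVlt; apply/orP; left; apply/eqP; rewrite !expr2; ring.
Qed.
End G.

Section Integ.
Context (R : realType) (d : nat) (dT : measure_display) (T : measurableType dT)
  (P : probability T R).
Variables (F : T -> 'rV[R]_d -> R) (f : 'rV[R]_d -> R) (x : 'rV[R]_d) (sigma : R).
Hypothesis hFint : forall y, P.-integrable setT (fun xi => (F xi y)%:E).
Hypothesis hf : forall y, (\int[P]_xi (F xi y)%:E)%E = (f y)%:E.
Hypothesis hgint : forall (i : 'I_d),
      P.-integrable setT (fun xi => (grad (F xi) x ord0 i)%:E).
Hypothesis hgunb : forall (i : 'I_d),
      (\int[P]_xi (grad (F xi) x ord0 i)%:E)%E = (grad f x ord0 i)%:E.

Let c i := grad f x ord0 i.
Let G xi i := grad (F xi) x ord0 i.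

Lemma mF y : measurable_fun setT (fun xi => F xi y).
Proof. by apply/measurable_realfun.measurable_EFinP; exact: (measurable_int _ (hFint y)). Qed.

Lemma mG i : measurable_fun setT (fun xi => G xi i).
Proof. by apply/measurable_realfun.measurable_EFinP; exact: (measurable_int _ (hgint i)). Qed.

Lemma int_cst (k : R) : P.-integrable setT (fun _ => k%:E).
Proof. exact: (finite_measure_integrable_cst P k measurableT). Qed.

Lemma integral_cstE (k : R) : (\int[P]_xi k%:E)%E = k%:E.
Proof. rewrite integral_cst //. have -> : (P : {measure set T -> \bar R}) setT = 1%E by exact: probability_setT. by rewrite mule1. Qed.

Lemma int_term (a : 'I_d -> R) j :
  P.-integrable setT (fun xi => (a j * G xi j)%:E).
Proof.
apply: (eq_integrable measurableT (fun xi => (a j)%:E * (G xi j)%:E)%E).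
  by move=> xi _; rewrite EFinM.
exact: (integrableZl measurableT (a j) (hgint j)).
Qed.

Lemma int_lin (a : 'I_d -> R) :
  (\int[P]_xi (\sum_j a j * G xi j)%:E)%E = (\sum_j a j * c j)%:E.
Proof.
under eq_integral do rewrite -sumEFin.
rewrite (integral_sum measurableT (int_term a)) -sumEFin.
apply: eq_bigr => j _.
under eq_integral do rewrite EFinM.
by rewrite (integralZl measurableT (hgint j)) hgunb.
Qed.

Lemma int_lin_int (a : 'I_d -> R) :
  P.-integrable setT (fun xi => (\sum_j a j * G xi j)%:E).
Proof.
apply: (eq_integrable measurableT (fun xi => \sum_j (a j * G xi j)%:E)).
  by move=> xi _; rewrite sumEFin.
by apply: integrable_sum => // j _; exact: int_term.
Qed.

Let dl xi i := c i - G xi i.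

Lemma dl_lin_eq (a : 'I_d -> R) xi :
  \sum_j a j * dl xi j = \sum_j a j * c j - \sum_j a j * G xi j.
Proof. by rewrite -sumrB; apply: eq_bigr => j _; rewrite /dl mulrBr. Qed.

Lemma int_dl_lin_int (a : 'I_d -> R) :
  P.-integrable setT (fun xi => (\sum_j a j * dl xi j)%:E).
Proof.
apply: (eq_integrable measurableT
  (fun xi => (\sum_j a j * c j)%:E - (\sum_j a j * G xi j)%:E)%E).
  by move=> xi _; rewrite dl_lin_eq EFinB.
exact: (integrableB measurableT (int_cst _) (int_lin_int a)).
Qed.

Lemma int_dl_lin (a : 'I_d -> R) :
  (\int[P]_xi (\sum_j a j * dl xi j)%:E)%E = 0%E.
Proof.
under eq_integral do rewrite dl_lin_eq EFinB.
rewrite (integralB_EFin measurableT (int_cst _) (int_lin_int a)).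
by rewrite int_lin integral_cstE subee.
Qed.


Hypothesis hvarx : (\int[P]_xi ((norm2 (grad f x - grad (F xi) x)) ^+ 2)%:E
        <= (sigma ^+ 2)%:E)%E.

Lemma Q_eq xi : (norm2 (grad f x - grad (F xi) x)) ^+ 2 = sq (dl xi).
Proof. by rewrite norm2_sq /sq; apply: eq_bigr => i _; rewrite /dl /c /G /grad !mxE. Qed.

Lemma mQ : measurable_fun setT (fun xi => sq (dl xi)).
Proof.
rewrite /sq; apply: measurable_sum => i; apply: measurable_realfun.measurable_funX.
by apply: measurable_realfun.measurable_funB; [exact: measurable_cst | exact: mG].
Qed.

Lemma int_Q_le : (\int[P]_xi (sq (dl xi))%:E <= (sigma ^+ 2)%:E)%E.
Proof.
apply: le_trans hvarx; rewrite le_eqVlt; apply/orP; left; apply/eqP.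
by apply: eq_integral => xi _; rewrite Q_eq.
Qed.

Lemma int_Q : P.-integrable setT (fun xi => (sq (dl xi))%:E).
Proof.
apply/integrableP; split.
  by apply/measurable_realfun.measurable_EFinP; exact: mQ.
rewrite (eq_integral (fun xi => (sq (dl xi))%:E)); last by move=> xi _; rewrite abse_EFin ger0_norm // sq_ge0.
by apply: (le_lt_trans int_Q_le); exact: ltry.
Qed.

Lemma sq_split (w : 'I_d -> R) xi :
  sq (fun j => w j - dl xi j) = (sq w + sq (dl xi)) - \sum_j (2 * w j) * dl xi j.
Proof.
rewrite /sq -big_split -sumrB; apply: eq_bigr => j _ /=; ring.
Qed.

Lemma int_quad (w : 'I_d -> R) :
  (\int[P]_xi (sq (fun j => w j - dl xi j))%:E)%E =
  ((sq w)%:E + \int[P]_xi (sq (dl xi))%:E)%E.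
Proof.
under eq_integral do rewrite sq_split.
have i1 : P.-integrable setT (EFin \o (fun xi => sq w + sq (dl xi))).
  apply: (eq_integrable measurableT (fun xi => (sq w)%:E + (sq (dl xi))%:E)%E).
    by move=> xi _; rewrite /= EFinD.
  exact: (integrableD measurableT (int_cst _) int_Q).
rewrite (integralB_EFin measurableT i1 (int_dl_lin_int _)) int_dl_lin sube0.
under eq_integral do rewrite EFinD.
by rewrite (integralD measurableT (int_cst _) int_Q) integral_cstE.
Qed.


Lemma f_rem (v : 'rV[R]_d) (B : R) :
  (forall xi, `|F xi (x + v) - F xi x - \sum_j v ord0 j * G xi j| <= B) ->
  `|f (x + v) - f x - \sum_j v ord0 j * c j| <= B.
Proof.
move=> hB.
have i1 : P.-integrable setT (EFin \o (fun xi => F xi (x + v) - F xi x)).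
  apply: (eq_integrable measurableT (fun xi => (F xi (x + v))%:E - (F xi x)%:E)%E).
    by move=> xi _; rewrite /= EFinB.
  exact: (integrableB measurableT (hFint _) (hFint _)).
have i2 : P.-integrable setT
    (EFin \o (fun xi => F xi (x + v) - F xi x - \sum_j v ord0 j * G xi j)).
  apply: (eq_integrable measurableT
    (fun xi => (F xi (x + v) - F xi x)%:E - (\sum_j v ord0 j * G xi j)%:E)%E).
    by move=> xi _; rewrite /= EFinB.
  exact: (integrableB measurableT i1 (int_lin_int _)).
have E : (f (x + v) - f x - \sum_j v ord0 j * c j)%:E =
    (\int[P]_xi (F xi (x + v) - F xi x - \sum_j v ord0 j * G xi j)%:E)%E.
  under [RHS]eq_integral do rewrite EFinB.
  rewrite (integralB_EFin measurableT i1 (int_lin_int _)).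
  under eq_integral do rewrite EFinB.
  rewrite (integralB_EFin measurableT (hFint _) (hFint _)) !hf int_lin.
  by rewrite !EFinB.
have m2 := measurable_int _ i2.
rewrite -lee_fin -abse_EFin E.
apply: (le_trans (le_abse_integral P measurableT m2)).
apply: (@le_trans _ _ (\int[P]_xi B%:E)%E); last by rewrite integral_cstE.
apply: ge0_le_integral => //.
- exact: (measurable_int _ (integrable_abse i2)).
- by move=> xi _; rewrite abse_EFin lee_fin.
Qed.


Lemma int_sqw (w : 'I_d -> R) :
  P.-integrable setT (fun xi => (sq (fun j => w j - dl xi j))%:E).
Proof.
have i1 : P.-integrable setT (EFin \o (fun xi => sq w + sq (dl xi))).
  apply: (eq_integrable measurableT (fun xi => (sq w)%:E + (sq (dl xi))%:E)%E).
    by move=> xi _; rewrite /= EFinD.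
  exact: (integrableD measurableT (int_cst _) int_Q).
apply: (eq_integrable measurableT
  (fun xi => (sq w + sq (dl xi))%:E - (\sum_j (2 * w j) * dl xi j)%:E)%E).
  by move=> xi _; rewrite sq_split EFinB.
exact: (integrableB measurableT i1 (int_dl_lin_int _)).
Qed.

End Integ.

Section M1.
Context {R : realType} {d : nat}.
Implicit Types (b : {ffun 'I_d -> bool}).

Lemma sq_sign (nu : R) b : \sum_i (nu *: signvec b) ord0 i ^+ 2 = nu ^+ 2 * d%:R.
Proof.
under eq_bigr do rewrite mxE signvecE exprMn sgn_sqX mulr1.
by rewrite sumr_const card_ord mulr_natr.
Qed.

Lemma sign_rem (Fn : 'rV[R]_d -> R) (L nu : R) x b (g : 'I_d -> R) :
  0 < nu ->
  `|Fn (x + nu *: signvec b) - Fn x - \sum_j (nu *: signvec b) ord0 j * g j|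
     <= L / 2 * (nu ^+ 2 * d%:R) ->
  `|(Fn (x + nu *: signvec b) - Fn x) / nu - dt g b| <= L * nu * d%:R / 2.
Proof.
move=> nu0 H.
have E : \sum_j (nu *: signvec b) ord0 j * g j = nu * dt g b.
  rewrite /dt mulr_sumr; apply: eq_bigr => j _; rewrite mxE signvecE; ring.
rewrite E in H.
have -> : (Fn (x + nu *: signvec b) - Fn x) / nu - dt g b =
    (Fn (x + nu *: signvec b) - Fn x - nu * dt g b) / nu.
  by field; rewrite gt_eqF.
rewrite normrM normfV (ger0_norm (ltW nu0)) ler_pdivrMr //.

apply: (le_trans H); rewrite le_eqVlt; apply/orP; left; apply/eqP; ring.
Qed.

Lemma h_bound (qf : {ffun 'I_d -> bool} -> R) (c : 'I_d -> R) (beta : R) :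
  (forall b, `|qf b - dt c b| <= beta) ->
  forall i, `|(2 ^+ d)^-1 * \sum_b qf b * sgn b i - c i| <= beta.
Proof.
move=> hq i.
have H2 : (0 : R) < 2 ^+ d by apply: exprn_gt0.
have -> : c i = (2 ^+ d)^-1 * \sum_b dt c b * sgn b i.
  by rewrite /dt avg_dot_sgn mulrA mulVf ?mul1r // gt_eqF.
have Hi : (0 : R) <= (2 ^+ d)^-1 by rewrite invr_ge0 ltW.
rewrite -mulrBr -sumrB normrM (ger0_norm Hi) ler_pdivrMl //.
apply: (le_trans (ler_norm_sum _ _ _)).
apply: (@le_trans _ _ (\sum_(b : {ffun 'I_d -> bool}) beta)).
  apply: ler_sum => b _; rewrite -mulrBl normrM abs_sgn mulr1; exact: hq.
by rewrite sumr_const card_sgn -natrX mulr_natl.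
Qed.

End M1.

Lemma measurable_bigmax {dT : measure_display} {T : measurableType dT} {R : realType}
  (I : Type) (s : seq I) (g : I -> T -> R) :
  (forall i, measurable_fun setT (g i)) ->
  measurable_fun setT (fun xi => \big[Num.max/0]_(i <- s) g i xi).
Proof.
move=> mg; elim: s => [|i s IH].
  under eq_fun do rewrite big_nil; exact: measurable_cst.
under eq_fun do rewrite big_cons.
exact: measurable_realfun.measurable_maxr.
Qed.

Theorem lemma3 (R : realType) (d : nat) (dT : measure_display)
  (T : measurableType dT) (P : probability T R)
  (K : set 'rV[R]_d) (F : T -> 'rV[R]_d -> R) (f : 'rV[R]_d -> R)
  (L sigma nu : R)
  (* each f(.; xi) is differentiable with L-Lipschitz gradient *)
  (hFdiff : forall xi x, differentiable (F xi) x)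
  (hFlip : forall xi x y,
      norm2 (grad (F xi) x - grad (F xi) y) <= L * norm2 (x - y))
  (* f(x) = E_xi[f(x; xi)] *)
  (hFint : forall x, P.-integrable setT (fun xi => (F xi x)%:E))
  (hf : forall x, (\int[P]_xi (F xi x)%:E)%E = (f x)%:E)
  (* f differentiable and E_xi[grad f(x; xi)] = grad f(x) *)
  (hfdiff : forall x, differentiable f x)
  (hgint : forall x (i : 'I_d),
      P.-integrable setT (fun xi => (grad (F xi) x ord0 i)%:E))
  (hgunb : forall x (i : 'I_d),
      (\int[P]_xi (grad (F xi) x ord0 i)%:E)%E = (grad f x ord0 i)%:E)
  (* bounded variance on K *)
  (hvar : forall x, K x ->
      (\int[P]_xi ((norm2 (grad f x - grad (F xi) x)) ^+ 2)%:E
        <= (sigma ^+ 2)%:E)%E)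
  (hnu : 0 < nu) :
  forall x, K x ->
  (\int[P]_xi
     ((2 ^+ d)^-1 * \sum_(b : {ffun 'I_d -> bool})
        (normInf (g_nu (F xi) nu x b - grad_f_nu f nu x)) ^+ 2)%:E
   <= (3 * nu ^+ 2 * (d%:R) ^+ 2 * L ^+ 2 / 2
       + 10 * (norm2 (grad f x)) ^+ 2 + 8 * sigma ^+ 2)%:E)%E.
Proof.
move=> x Kx.
have hvarx := hvar x Kx.
pose c := fun i => grad f x ord0 i.
pose dl := fun xi i => c i - grad (F xi) x ord0 i.
pose beta := L * nu * d%:R / 2.
pose h := fun i => grad_f_nu f nu x ord0 i.
pose q := fun xi b => (F xi (x + nu *: signvec b) - F xi x) / nu.
have TF xi b : `|q xi b - dt (fun j => c j - dl xi j) b| <= beta.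
  have -> : dt (fun j => c j - dl xi j) b = dt (fun j => grad (F xi) x ord0 j) b.
    by apply: eq_bigr => j _; rewrite /dl; ring.
  apply: sign_rem => //.
  rewrite -(sq_sign nu b) -dirderE //; exact: taylor.
have Tf b : `|(f (x + nu *: signvec b) - f x) / nu - dt c b| <= beta.
  apply: sign_rem => //.
  rewrite -(sq_sign nu b).
  apply: (f_rem _ _ _ _ P F f x hFint hf (hgint x) (hgunb x)) => xi.
  rewrite -dirderE //; exact: taylor.
have hh i : `|h i - c i| <= beta.
  have -> : h i = (2 ^+ d)^-1 * \sum_b ((f (x + nu *: signvec b) - f x) / nu) * sgn b i.
    rewrite /h /grad_f_nu mxE summxE; congr (_ * _); apply: eq_bigr => b _.
    by rewrite /g_nu !mxE.
  exact: h_bound Tf i.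
have [a1 [a2 [K0 [w1 [w2 [a10 [a20 K00] a12 aK hX]]]]]] := choose_case c.
have Hent xi b i : (g_nu (F xi) nu x b - grad_f_nu f nu x) ord0 i = q xi b * sgn b i - h i.
  by rewrite /h /q /sgn /g_nu !mxE.
have Hxi xi : (2 ^+ d)^-1 * \sum_b (normInf (g_nu (F xi) nu x b - grad_f_nu f nu x)) ^+ 2
   <= 3 * (a1 * sq (fun j => w1 j - dl xi j) + a2 * sq (fun j => w2 j - dl xi j) + K0)
      + 6 * beta ^+ 2.
  have -> : \sum_b (normInf (g_nu (F xi) nu x b - grad_f_nu f nu x)) ^+ 2 =
      \sum_b (\big[Num.max/0]_(i < d) `|q xi b * sgn b i - h i|) ^+ 2.
    apply: eq_bigr => b _; rewrite /normInf; congr (_ ^+ 2).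
    by apply: eq_bigr => i _; rewrite Hent.
  by apply: perxi => //; exact: hX.
pose Q1 := fun xi => sq (fun j => w1 j - dl xi j).
pose Q2 := fun xi => sq (fun j => w2 j - dl xi j).
have iQ1 : P.-integrable setT (fun xi => (Q1 xi)%:E).
  exact: (int_sqw _ _ _ _ P F f x sigma (hgint x) hvarx w1).
have iQ2 : P.-integrable setT (fun xi => (Q2 xi)%:E).
  exact: (int_sqw _ _ _ _ P F f x sigma (hgint x) hvarx w2).
have mQ1 : measurable_fun setT Q1.
  by apply/measurable_realfun.measurable_EFinP; exact: (measurable_int _ iQ1).
have mQ2 : measurable_fun setT Q2.
  by apply/measurable_realfun.measurable_EFinP; exact: (measurable_int _ iQ2).
apply: (@le_trans _ _ (\int[P]_xi (3 * (a1 * Q1 xi + a2 * Q2 xi + K0) + 6 * beta ^+ 2)%:E)%E).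
  apply: ge0_le_integral => //.
  - move=> xi _; rewrite lee_fin; apply: mulr_ge0.
      by rewrite invr_ge0 exprn_ge0.
    by apply: sumr_ge0 => b _; exact: sqr_ge0.
  - apply/measurable_realfun.measurable_EFinP.
    apply: measurable_realfun.measurable_funM; first exact: measurable_cst.
    apply: measurable_sum => b; apply: measurable_realfun.measurable_funX.
    rewrite /normInf; apply: measurable_bigmax => i.
    under eq_fun do rewrite Hent.
    apply: measurableT_comp => //.
    apply: measurable_realfun.measurable_funB; last exact: measurable_cst.
    apply: measurable_realfun.measurable_funM; last exact: measurable_cst.
    apply: measurable_realfun.measurable_funM; last exact: measurable_cst.
    by apply: measurable_realfun.measurable_funB; exact: (mF _ _ _ _ P F hFint).
  - apply/measurable_realfun.measurable_EFinP.
    apply: measurable_realfun.measurable_funD; last exact: measurable_cst.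
    apply: measurable_realfun.measurable_funM; first exact: measurable_cst.
    apply: measurable_realfun.measurable_funD; last exact: measurable_cst.
    by apply: measurable_realfun.measurable_funD;
      (apply: measurable_realfun.measurable_funM; first exact: measurable_cst).
  - by move=> xi _; rewrite lee_fin; exact: Hxi.
set Ie := (\int[P]_xi (sq (dl xi))%:E)%E.
have Ie0 : (0 <= Ie)%E by apply: integral_ge0 => xi _; rewrite lee_fin sq_ge0.
have IeS : (Ie <= (sigma ^+ 2)%:E)%E := int_Q_le _ _ _ _ P F f x sigma hvarx.
have Ifin : Ie \is a fin_num by rewrite ge0_fin_numE // (le_lt_trans IeS) // ltry.
have HQ1 := int_quad _ _ _ _ P F f x sigma (hgint x) (hgunb x) hvarx w1.
have HQ2 := int_quad _ _ _ _ P F f x sigma (hgint x) (hgunb x) hvarx w2.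
rewrite (eq_integral (fun xi => ((3 * a1)%:E * (Q1 xi)%:E +
    ((3 * a2)%:E * (Q2 xi)%:E + (3 * K0 + 6 * beta ^+ 2)%:E))%E)); last first.
  by move=> xi _; rewrite -!EFinM -!EFinD; congr EFin; ring.
have iZ1 := integrableZl measurableT (3 * a1) iQ1.
have iZ2 := integrableZl measurableT (3 * a2) iQ2.
have iC := int_cst _ _ _ P (3 * K0 + 6 * beta ^+ 2).
rewrite (integralD measurableT iZ1 (integrableD measurableT iZ2 iC)).
rewrite (integralD measurableT iZ2 iC).
rewrite (integralZl measurableT iQ1) (integralZl measurableT iQ2) integral_cstE.
rewrite /Q1 /Q2 HQ1 HQ2 -/Ie -(fineK Ifin).
rewrite -[((sq w1)%:E + _)%E]EFinD -[((sq w2)%:E + _)%E]EFinD -!EFinM -!EFinD lee_fin.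
have i0 : 0 <= fine Ie by apply: fine_ge0.
have iS : fine Ie <= sigma ^+ 2 by rewrite -lee_fin fineK.
move: i0 iS; set i := fine Ie => i0 iS.
have -> : norm2 (grad f x) ^+ 2 = sq c by rewrite norm2_sq.
have p1 : 0 <= (8 - 3 * (a1 + a2)) * i by apply: mulr_ge0 => //; lra.
have p2 : 0 <= (a1 + a2) * (sigma ^+ 2 - i) by apply: mulr_ge0; lra.
rewrite /beta.
nra.
Qed.
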